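(* Let $3\leq q<p$ be primes with $q-1\mid p-1$. Let $f:\mathbb{Z}_p\to\mathbb{Z}_q$ satisfy $f(0)=0$ and be such that the restriction of $f$ to $\mathbb{Z}_p^\times$ is a surjective group homomorphism $\mathbb{Z}_p^\times\to\mathbb{Z}_q^\times$ (of multiplicative groups). Let $A$ be the $p\times p$ matrix over the field $\mathbb{Z}_q$, with rows and columns indexed by $\mathbb{Z}_p$, given by $A_{i+j,i}=f(j)$ for $i,j\in\mathbb{Z}_p$. Then $A$ has rank $p-1$. *)

(* Defs.v *)
From mathcomp Require Import all_boot all_order all_algebra.
Set Implicit Arguments. Unset Strict Implicit. Unset Printing Implicit Defensive.
Import GRing.Theory.
Local Open Scope ring_scope.

Definition units_surj_hom (p q : nat) (f : 'F_p -> 'F_q) : Prop :=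
  [/\ (forall x : 'F_p, x != 0 -> f x != 0),
      (forall x y : 'F_p, x != 0 -> y != 0 -> f (x * y) = f x * f y)
    & (forall z : 'F_q, z != 0 -> exists2 x : 'F_p, x != 0 & f x = z)].

(* The p x p matrix over Z_q with rows/columns indexed by Z_p (identified
   with 'I_p via k |-> k mod p), with A_{i+j,i} = f(j), i.e.
   A_{r,c} = f(r - c). *)
Definition circA (p q : nat) (f : 'F_p -> 'F_q) : 'M['F_q]_p :=
  \matrix_(r < p, c < p) f ((r%:R : 'F_p) - (c%:R : 'F_p)).

(* Main.v *)
Require Import Defs.
From mathcomp Require Import all_boot all_order all_algebra.
From mathcomp Require Import ring zify.
Local Open Scope ring_scope.
Import GRing.Theory.

Section Aux.
Variables (p q : nat) (pp : prime p) (qp : prime q).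
Variable f : 'F_p -> 'F_q.
Hypothesis f0 : f 0 = 0.
Hypothesis fnz : forall x : 'F_p, x != 0 -> f x != 0.
Hypothesis fM' : forall x y : 'F_p, x != 0 -> y != 0 -> f (x * y) = f x * f y.

Lemma fM x y : f (x * y) = f x * f y.
Proof.
have [->|x0] := eqVneq x 0; first by rewrite mul0r f0 mul0r.
have [->|y0] := eqVneq y 0; first by rewrite mulr0 f0 mulr0.
exact: fM'.
Qed.

Lemma f1 : f 1 = 1.
Proof.
have h : f 1 * f 1 = f 1 * 1 by rewrite -fM !mulr1.
have nz := @fnz 1 (oner_neq0 _). exact: (mulfI nz h).
Qed.

Lemma sum_f0 (g : 'F_p) : g != 0 -> f g != 1 -> \sum_x f x = 0.
Proof.
move=> gnz g1.
have inj : injective (fun x : 'F_p => g * x) by apply: mulfI.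
have E : \sum_x f x = f g * \sum_x f x.
  by rewrite {1}(reindex_inj inj) /= mulr_sumr; apply: eq_bigr => x _; rewrite fM.
have : (1 - f g) * \sum_x f x = 0 by rewrite mulrBl mul1r -E subrr.
move/eqP; rewrite mulf_eq0 subr_eq0 eq_sym (negbTE g1) /=.
by move/eqP.
Qed.

Lemma sum_Ip (F : 'F_p -> 'F_q) : \sum_(r < p) F (r%:R) = \sum_x F x.
Proof.
pose h : 'F_p -> 'I_p := cast_ord (Fp_cast pp).
have hb : bijective h.
  by exists (cast_ord (esym (Fp_cast pp))) => x; rewrite /h ?cast_ordK ?cast_ordKV.
rewrite (reindex h) /=; last by apply: onW_bij.
apply: eq_bigr => x _; congr F.
by rewrite /h /= natr_Zp.
Qed.

Lemma castI (r s : 'I_p) : ((r%:R : 'F_p) == s%:R) = (r == s).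
Proof.
apply/eqP/eqP => [h|->] //.
apply: val_inj => /=.
have := congr1 (@nat_of_ord _) h.
by rewrite !val_Fp_nat // !modn_small.
Qed.

Lemma conv_sum (a b : 'F_p) (g : 'F_p) : g != 0 -> f g != 1 ->
  \sum_k f (a - k) * (f (b - k))^-1 = if a == b then (p%:R - 1) else -1.
Proof.
move=> gnz g1.
have inj : injective (fun x : 'F_p => b - x).
  by move=> x y /= /addrI /oppr_inj.
transitivity (\sum_k f ((a - b) + k) * (f k)^-1).
  rewrite (reindex_inj inj) /=; apply: eq_bigr => k _.
  by congr (f _ * (f _)^-1); ring.
rewrite -subr_eq0.
have [->|d0] := eqVneq (a - b) 0.
  rewrite (bigD1 0) //= f0 invr0 mulr0 add0r.
  under eq_bigr => k k0 do rewrite add0r mulfV ?fnz //.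
  rewrite sumr_const cardC1 card_Fp //.
  by rewrite -{2}(prednK (prime_gt0 pp)) mulrSr addrK.
idtac.
set d := a - b.
have E : forall k, k != 0 -> f (d + k) * (f k)^-1 = f (1 + d * k^-1).
  move=> k k0; have -> : d + k = (1 + d * k^-1) * k.
    by rewrite mulrDl mul1r -mulrA mulVf // mulr1 addrC.
  rewrite fM.
  by rewrite mulfK ?fnz.
have hinj : injective (fun k : 'F_p => d * k^-1).
  by move=> x y /= /(mulfI d0) /invr_inj.
have S1 : \sum_k f (1 + d * k^-1) = 0.
  rewrite (reindex_inj hinj) /=.
  under eq_bigr => k _ do rewrite invfM invrK mulrA mulfV // mul1r.
  have ainj : injective (fun k : 'F_p => 1 + k) by apply: addrI.
  transitivity (\sum_k f k); last exact: sum_f0 gnz g1.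
  by symmetry; rewrite (reindex_inj ainj).
move: S1; rewrite (bigD1 0) //= invr0 mulr0 addr0 f1 => /eqP.
rewrite addrC addr_eq0 => /eqP <-.
rewrite (bigD1 0) //= f0 invr0 mulr0 add0r.
by apply: eq_bigr => k k0; rewrite E.
Qed.
End Aux.

Theorem lemma4p7 (p q : nat) (f : 'F_p -> 'F_q) :
  prime p -> prime q -> (3 <= q)%N -> (q < p)%N -> (q.-1 %| p.-1)%N ->
  f 0 = 0 -> units_surj_hom f ->
  \rank (circA f) = p.-1.
Proof.
move=> pp qp q3 qltp _ f0 [fnz fM' fsurj].
have m1nz : (-1 : 'F_q) != 0 by rewrite oppr_eq0 oner_eq0.
have [g gnz fg] := fsurj _ m1nz.
have two : (2%:R : 'F_q) != 0.
  apply/eqP => h; have := congr1 (@nat_of_ord _) h.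
  by rewrite val_Fp_nat // modn_small.
have g1 : f g != 1.
  rewrite fg; apply/eqP => h; move: two; rewrite mulr2n -{1}h addNr eqxx //.
have pnz : (p%:R : 'F_q) != 0.
  apply/eqP => h; have := congr1 (@nat_of_ord _) h.
  rewrite val_Fp_nat //= => /eqP; rewrite -/(dvdn q p) dvdn_prime2 //.
  by rewrite ltn_eqF.
have p0 := prime_gt0 pp.
pose B : 'M['F_q]_p := \matrix_(r < p, c < p) (f ((c%:R : 'F_p) - r%:R))^-1.
have AB : circA f *m B = p%:R *: 1%:M - const_mx 1.
  apply/matrixP => r s; rewrite !mxE.
  under eq_bigr => k _ do rewrite !mxE.
  rewrite (sum_Ip _ _ pp (fun x => f (r%:R - x) * (f (s%:R - x))^-1)).
  rewrite (conv_sum _ _ pp f f0 fnz fM' _ _ _ gnz g1) castI //.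
  by case: (r == s); rewrite ?mulr1 ?mulr0 ?sub0r.
have ub : \rank (circA f) != p.
  apply/negP => /eqP hr.
  have fr : row_free (circA f) by rewrite -row_leq_rank hr.
  have : (const_mx 1 : 'rV['F_q]_p) *m circA f == 0.
    apply/eqP/matrixP => i c; rewrite !mxE.
    under eq_bigr => k _ do rewrite !mxE mul1r.
    rewrite (sum_Ip _ _ pp (fun x => f (x - c%:R))).
    have sinj : injective (fun x : 'F_p => x + c%:R) by apply: addIr.
    rewrite (reindex_inj sinj) /=.
    under eq_bigr => k _ do rewrite addrK.
    exact: (sum_f0 _ _ _ f0 fM' _ gnz g1).
  rewrite mulmx_free_eq0 // => /eqP/matrixP/(_ 0 (Ordinal p0)).
  by rewrite !mxE => /eqP; rewrite oner_eq0.
have lb : (p <= \rank (circA f) + 1)%N.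
  have e : p%:R *: 1%:M = circA f *m B + const_mx 1 by rewrite AB subrK.
  have := mxrank_add (circA f *m B) (const_mx 1 : 'M['F_q]_p).
  rewrite -e mxrank_scale_nz // mxrank1 => h.
  apply: (leq_trans h); apply: leq_add; first exact: mxrankM_maxl.
  have -> : (const_mx 1 : 'M['F_q]_p) =
      (const_mx 1 : 'M['F_q]_(p, 1)) *m (const_mx 1 : 'M['F_q]_(1, p)).
    by apply/matrixP => i j; rewrite !mxE big_ord1 !mxE mulr1.
  exact: leq_trans (mxrankM_maxr _ _) (rank_leq_row _).
have := rank_leq_row (circA f).
move: ub lb; set n := \rank _ => ub lb le.
move/eqP: ub => ub; lia.
Qed.
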